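(* Let $X$ be an infinite compact metrizable space, $h\colon X\to X$ a minimal homeomorphism, and suppose $(X,h)$ has the topological small boundary property. Let $\varepsilon>0$. Then for any closed $F\subset X$ and open $U\subset X$ with $F\subset U$, there exist a closed set $K\subset X$ and an open set $V\subset X$ with $F\subset K\subset V\subset\overline{V}\subset U$ and $\mu(V\setminus K)<\varepsilon$ for all $\mu\in M_h(X)$.
   Context: $M_h(X)$ denotes the set of $h$-invariant Borel probability measures on $X$. A closed set $F\subset X$ is topologically $h$-small if there is $m\in\mathbb{Z}_{+}$ such that whenever $d(0),\dots,d(m)$ are $m+1$ distinct integers, $h^{d(0)}(F)\cap\cdots\cap h^{d(m)}(F)=\varnothing$. $(X,h)$ has the topological small boundary property if whenever $F,K\subset X$ are disjoint compact sets, there exist open sets $U,V\subset X$ with $F\subset U$, $K\subset V$, $\overline{U}\cap\overline{V}=\varnothing$ and $\partial U$ (boundary of $U$) topologically $h$-small. *)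

(* Defs.v *)
From HB Require Import structures.
From mathcomp Require Import all_boot all_order all_algebra.
From mathcomp Require Import all_classical all_reals all_analysis.
Set Implicit Arguments. Unset Strict Implicit. Unset Printing Implicit Defensive.
Import Order.TTheory GRing.Theory Num.Theory.
Local Open Scope classical_set_scope.
Local Open Scope ring_scope.

Definition homeomorphism {X : topologicalType} (h : X -> X) : Prop :=
  exists g : X -> X, [/\ cancel h g, cancel g h, continuous h & continuous g].

Definition minimal_map {X : topologicalType} (h : X -> X) : Prop :=
  forall Y : set X, closed Y -> h @` Y = Y -> Y = set0 \/ Y = setT.

(* h^d(F) for d : int, for a bijection h: for d = n >= 0 the image under
   h^n, for d = -n < 0 the image under h^{-n}, i.e. the preimage under h^n. *)
Definition hpow_set {X : Type} (h : X -> X) (d : int) (F : set X) : set X :=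
  match d with
  | Posz n => iter n h @` F
  | Negz n => iter n.+1 h @^-1` F
  end.

Definition top_small {X : topologicalType} (h : X -> X) (F : set X) : Prop :=
  closed F /\
  exists m : nat, forall d : 'I_m.+1 -> int, injective d ->
    \bigcap_(i in [set: 'I_m.+1]) hpow_set h (d i) F = set0.

Definition boundary {X : topologicalType} (A : set X) : set X :=
  closure A `\` interior A.

Definition top_small_boundary_property {X : topologicalType} (h : X -> X) : Prop :=
  forall F K : set X, compact F -> compact K -> F `&` K = set0 ->
    exists U V : set X, [/\ open U /\ open V, F `<=` U, K `<=` V,
      closure U `&` closure V = set0 & top_small h (boundary U)].

Definition borel_type (X : ptopologicalType) := g_sigma_algebraType (@open X).

Definition h_invariant {X : ptopologicalType} {R : realType} (h : X -> X)
  (mu : probability (borel_type X) R) : Prop :=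
  forall A : set (borel_type X), measurable A -> mu (h @^-1` A) = mu A.

(* Main.v *)
Require Import Defs.
From HB Require Import structures.
From mathcomp Require Import all_boot all_order all_algebra.
From mathcomp Require Import all_classical all_reals all_analysis.
From mathcomp Require Import measurable_realfun.
Import Order.TTheory GRing.Theory Num.Theory.
Local Open Scope classical_set_scope.
Local Open Scope ring_scope.
Lemma mo (X : ptopologicalType) (A : set X) : open A -> measurable (A : set (borel_type X)).
Proof. move=> oA. exact: sub_sigma_algebra. Qed.

Lemma meas_bound (R : realType) (X : ptopologicalType) (mu : probability (borel_type X) R)
  (N m : nat) (A : 'I_N -> set X) : (forall j, open (A j)) ->
  (forall y, (#|[pred j : 'I_N | y \in A j]| <= m)%N) ->
  (\sum_(j < N) mu (A j) <= m%:R%:E)%E.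
Proof.
move=> oA cA.
have mA j : measurable (A j : set (borel_type X)) by exact: mo.
have -> : (\sum_(j < N) mu (A j) = \sum_(j < N) \int[mu]_(x in [set: borel_type X]) (\1_(A j) x)%:E)%E.
  by apply: eq_bigr => j _; rewrite integral_indic // setIT.
rewrite -(@ge0_integral_sum _ _ _ mu _ _ _ (fun j x => (\1_(A j) x)%:E)) //; last first.
  by move=> j; apply/measurable_EFinP; exact: measurable_indic.
apply: (@le_trans _ _ (\int[mu]_(x in [set: borel_type X]) (cst m%:R%:E x))%E); last first.
  rewrite integral_cst //; set s := (X in (_ * X)%E); have -> : s = 1%E by exact: probability_setT.
  by rewrite mule1.
apply: ge0_le_integral => //.
- by move=> x _; apply: sume_ge0 => j _; rewrite lee_fin.
- apply: emeasurable_sum => j; apply/measurable_EFinP; exact: measurable_indic.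
move=> x _ /=.
rewrite sumEFin lee_fin.
under eq_bigr do rewrite indicE.
rewrite -natr_sum ler_nat.
apply: leq_trans (cA x).
rewrite -sum1_card [X in (_ <= X)%N]big_mkcond /=.
apply: leq_sum => j _; case: (boolP (x \in A j)) => // H; by rewrite ifT // inE H.
Qed.
Definition nbd {R : realType} {X : pseudoPMetricType R} (B : set X) (n : nat) : set X :=
  \bigcup_(b in B) ball b n.+1%:R^-1.

Lemma shrink (R : realType) (X : pseudoPMetricType R) (f : nat -> X -> X)
  (fc : forall j, continuous (f j)) (B : set X) (cB : closed B)
  (cpt : compact [set: X]) (N m : nat)
  (H : forall x, (#|[pred j : 'I_N | f j.+1 x \in B]| <= m)%N) :
  exists n : nat, forall y, (#|[pred j : 'I_N | f j.+1 y \in nbd B n]| <= m)%N.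
Proof.
have /compact_near_coveringP cv := cpt.
have := cv nat \oo (fun n y => (#|[pred j : 'I_N | f j.+1 y \in nbd B n]| <= m)%N) _.
case=> [x _|M _ HM]; last by exists M => y; exact: (HM M (leqnn _) y I).
have : \forall x' \near x & i \near \oo,
    forall j : 'I_N, f j.+1 x' \in nbd B i -> f j.+1 x \in B.
  rewrite /prop_near2; have FF : Filter (filter_prod (nbhs x) (nbhs (\oo : set_system nat))) by apply: filter_prod_filter.
  suff HH : forall j : 'I_N, filter_prod (nbhs x) (nbhs (\oo : set_system nat))
      (fun p : X * nat => f j.+1 p.1 \in nbd B p.2 -> f j.+1 x \in B).
    by have := filter_forall FF HH.
  move=> j.
  have [xB|xB] := boolP (f j.+1 x \in B).
    by apply: (filterS _ (@filterT _ _ FF)) => -[].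
  have : open (~` B) by exact: closed_openC.
  move=> /[dup] oB; rewrite openE => /(_ (f j.+1 x)).
  have nBx : (~` B) (f j.+1 x) by move=> Bx; move/negP: xB; apply; rewrite in_setE.
  move=> /(_ nBx) /nbhs_ballP [r /= r0 rB].
  have r20 : 0 < r / 2 by rewrite divr_gt0.
  exists ([set x' | ball (f j.+1 x) (r / 2) (f j.+1 x')],
          [set i : nat | i.+1%:R^-1 < r / 2]) => /=.
    split.
      exact: (fc j.+1 x) _ (nbhsx_ballx _ _ r20).
    exact: (near_infty_natSinv_lt (PosNum r20)).
  move=> [x' i] /= [h1 h2]; rewrite in_setE => -[b Bb hb].
  exfalso; apply: (rB b) => //.
  apply: (@le_ball _ _ _ (r / 2 + i.+1%:R^-1)).
    by rewrite [leRHS](splitr r) lerD2l ltW.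
  by apply: ball_triangle h1 _; exact: ball_sym.
rewrite /prop_near2; apply: filterS => -[x' i] /= Hj.
apply: leq_trans (H x).
apply: subset_leq_card; apply/fintype.subsetP => j; rewrite !inE => hj.
by have := Hj j; rewrite !in_setE; apply.
Qed.

Lemma iter_cont (X : topologicalType) (h : X -> X) : continuous h ->
  forall k, continuous (iter k h).
Proof.
move=> hc k x; elim: k => [|k IH] /=; first exact: cvg_id.
exact: (continuous_comp IH (hc _)).
Qed.

Lemma inv_iter (R : realType) (X : ptopologicalType) (h : X -> X)
  (hc : continuous h) (mu : probability (borel_type X) R) :
  h_invariant h mu -> forall k (A : set X), open A ->
  mu (iter k h @^-1` A) = mu A.
Proof.
move=> hinv k; elim: k => [|k IH] A oA //=.
have oA' : open (h @^-1` A) by apply: open_comp => // x _; exact: hc.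
by rewrite (IH _ oA') hinv //; exact: mo.
Qed.

Theorem lemma4p8 (R : realType) (X : pseudoPMetricType R) (h : X -> X)
  (eps : R) :
  hausdorff_space X -> compact [set: X] -> infinite_set [set: X] ->
  homeomorphism h -> minimal_map h -> top_small_boundary_property h ->
  0 < eps ->
  forall F U : set X, closed F -> open U -> F `<=` U ->
  exists K V : set X, [/\ closed K /\ open V, F `<=` K, K `<=` V,
    closure V `<=` U &
    forall mu : probability (borel_type X) R, h_invariant h mu ->
      (mu (V `\` K) < eps%:E)%E].
Proof.
move=> _ cpt _ [g [_ _ hc _]] _ tsbp eps0 F U cF oU FU.
have cUc : compact (~` U) by apply: subclosed_compact cpt _ => //; exact: open_closedC.
have sep : forall A, compact A -> A `<=` U -> exists W : set X,
    [/\ open W, A `<=` W, closure W `<=` U & top_small h (boundary W)].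
  move=> A cA AU.
  have AUd : A `&` ~` U = set0.
    by apply/seteqP; split => // x [Ax nUx]; exact: nUx (AU _ Ax).
  have [W [W' [[oW oW'] AW UW' clWW' ts]]] := tsbp _ _ cA cUc AUd.
  exists W; split => // x clWx; have [//|nUx] := pselect (U x).
  have : (closure W `&` closure W') x by split => //; apply: subset_closure; exact: UW'.
  by rewrite clWW'.
have [U0 [oU0 FU0 cU0 [cB [m Hm]]]] := sep F (subclosed_compact cF cpt (fun _ _ => I)) FU.
have [U1 [oU1 cU01 cU1 _]] := sep (closure U0)
  (subclosed_compact (@closed_closure _ U0) cpt (fun _ _ => I)) cU0.
set B := boundary U0.
pose N := (Num.truncn (m%:R / eps)).+1.
have Hsmall : forall x, (#|[pred j : 'I_N | iter j.+1 h x \in B]| <= m)%N.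
  move=> x; rewrite leqNgt; apply/negP => Hlt.
  set P := [pred j : 'I_N | iter j.+1 h x \in B] in Hlt.
  pose d (i : 'I_m.+1) : int := Negz (enum_val (A:=P) (widen_ord Hlt i)).
  have dinj : injective d.
    move=> i1 i2; rewrite /d => -[] /val_inj E; apply: val_inj; exact: (congr1 val (enum_val_inj E)).
  have := Hm d dinj.
  have : (\bigcap_(i in [set: 'I_m.+1]) hpow_set h (d i) B) x.
    move=> i _; rewrite /d /=.
    have := enum_valP (A:=P) (widen_ord Hlt i); rewrite inE; exact.
  by move=> + E; rewrite E.
have [n Hn] := @shrink R X (fun k => iter k h) (iter_cont _ _ hc) B cB cpt N m Hsmall.
set O := (nbd B n)°.
have oO : open O by exact: open_interior.
have BO : B `<=` O.
  move=> b Bb; rewrite /O /interior /=.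
  apply: (filterS _ (nbhsx_ballx b (n.+1%:R^-1) _)); last by rewrite invr_gt0.
  by move=> y hy; exists b.
have Hc : forall y, (#|[pred j : 'I_N | y \in iter j.+1 h @^-1` O]| <= m)%N.
  move=> y; apply: leq_trans (Hn y).
  apply: subset_leq_card; apply/fintype.subsetP => j; rewrite !inE => hj.
  exact: interior_subset.
exists (closure U0), (U0 `|` (O `&` U1)); split.
- split; first exact: closed_closure.
  by apply: openU => //; exact: openI.
- by move=> x /FU0; exact: subset_closure.
- move=> x clx; have [U0x|nU0x] := pselect (U0 x); first by left.
  right; split; last exact: cU01.
  apply: BO; split => // /interior_subset; exact: nU0x.
- apply: subset_trans cU1; apply: closureS.
  move=> x [U0x|[_ //]]; apply: cU01; exact: subset_closure.
move=> mu hinv.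
have mO : measurable (O : set (borel_type X)) := mo _ _ oO.
have oA : forall j : 'I_N, open (iter j.+1 h @^-1` O).
  by move=> j; apply: open_comp oO => x _; exact: (iter_cont _ _ hc).
have Hsum := meas_bound R X mu N m (fun j : 'I_N => iter j.+1 h @^-1` O) oA Hc.
have E : (\sum_(j < N) mu (iter j.+1 h @^-1` O) = \sum_(j < N) mu O)%E.
  by apply: eq_bigr => j _; exact: inv_iter.
rewrite E in Hsum.
have le1 := probability_le1 mu mO.
have ge0 := measure_ge0 mu O.
have sub : (mu ((U0 `|` (O `&` U1)) `\` closure U0) <= mu O)%E.
  apply: le_measure; rewrite ?inE //.
    apply: mo; rewrite setDE; apply: openI; first by apply: openU => //; exact: openI.
    exact/closed_openC/closed_closure.
  move=> x [[U0x|[Ox _]] nK] //; exfalso; apply: nK; exact: subset_closure.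
apply: le_lt_trans sub _.
move: (mu O) Hsum le1 ge0 => [c| |] //.
2: by move=> *; exact: ltNyr.
rewrite sumEFin sumr_const card_ord !lee_fin lte_fin => Hs _ _.
have HN : m%:R / eps < N%:R := truncnS_gt _.
have h1 : m%:R < N%:R * eps by rewrite -ltr_pdivrMr.
rewrite ltNge; apply/negP => ce.
have h2 : N%:R * eps <= N%:R * c by rewrite ler_wpM2l.
have Hs2 : N%:R * c <= m%:R by rewrite mulr_natl.
by have := lt_le_trans h1 (le_trans h2 Hs2); rewrite ltxx.
Qed.
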